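(* Let $D_\infty=\langle s,t\mid t^2,\ tsts\rangle$. If $\alpha:D_\infty\curvearrowright X$ is a minimal continuous action on an infinite compact Hausdorff space $X$, then $\alpha$ is topologically free, i.e. for every $g\ne e$ in $D_\infty$ the set $\{x\in X: gx\ne x\}$ is dense in $X$. *)

(* Defs.v *)
From HB Require Import structures.
From mathcomp Require Import all_boot all_order all_algebra.
From mathcomp Require Import all_classical all_reals all_analysis.
Set Implicit Arguments. Unset Strict Implicit. Unset Printing Implicit Defensive.
Import Order.TTheory GRing.Theory Num.Theory.

(* The infinite dihedral group D_oo = < s, t | t^2, tsts >, modelled by its
   normal form: the pair (n, b) stands for s^n t^b  (n : int, b : bool).
   From t^2 = 1 and tsts = 1 we get t s^m = s^-m t, hence
   (s^n t^b)(s^m t^c) = s^(n + (-1)^b m) t^(b xor c). *)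
Definition Dinf := (int * bool)%type.

Definition dinf_one : Dinf := (0%R, false).
Definition dinf_mul (g h : Dinf) : Dinf :=
  ((g.1 + (if g.2 then - h.1 else h.1))%R, xorb g.2 h.2).
Definition dinf_s : Dinf := (1%R, false).
Definition dinf_t : Dinf := (0%R, true).

Local Open Scope classical_set_scope.

Definition continuous_dinf_action (X : topologicalType) (act : Dinf -> X -> X) :=
  [/\ (forall x, act dinf_one x = x),
      (forall g h x, act (dinf_mul g h) x = act g (act h x)) &
      (forall g, continuous (act g))].

Definition minimal_action (X : topologicalType) (act : Dinf -> X -> X) :=
  forall x : X, closure (range (fun g => act g x)) = setT.

Definition topologically_free (X : topologicalType) (act : Dinf -> X -> X) :=
  forall g : Dinf, g <> dinf_one -> dense [set x | act g x <> x].

(* Main.v *)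
Require Import Defs.
From HB Require Import structures.
From mathcomp Require Import all_boot all_order all_algebra.
From mathcomp Require Import all_classical all_reals all_analysis.
From mathcomp Require Import zify.
Local Open Scope classical_set_scope.
Import Order.TTheory GRing.Theory Num.Theory.

Definition dinv (h : Dinf) : Dinf := if h.2 then h else ((- h.1)%R, false).

Lemma dinv_mul h : dinf_mul (dinv h) h = dinf_one.
Proof. by case: h => m [] /=; rewrite /dinf_mul /dinf_one /= ?addNr ?subrr. Qed.

Lemma mul_dinv h : dinf_mul h (dinv h) = dinf_one.
Proof. by case: h => m [] /=; rewrite /dinf_mul /dinf_one /= ?opprK ?subrr. Qed.

Section Act.
Variables (X : topologicalType) (act : Dinf -> X -> X).
Hypothesis Hact : continuous_dinf_action act.

Lemma act_one x : act dinf_one x = x.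
Proof. by case: Hact. Qed.
Lemma act_mul g h x : act (dinf_mul g h) x = act g (act h x).
Proof. by case: Hact. Qed.
Lemma act_cont g : continuous (act g).
Proof. by case: Hact. Qed.

Lemma act_dinvK h x : act (dinv h) (act h x) = x.
Proof. by rewrite -act_mul dinv_mul act_one. Qed.
Lemma act_K h x : act h (act (dinv h) x) = x.
Proof. by rewrite -act_mul mul_dinv act_one. Qed.

Lemma fix_neg n y : act (n, false) y = y -> act ((- n)%R, false) y = y.
Proof.
move=> H; rewrite -{1}H -act_mul.
have -> : dinf_mul ((- n)%R, false) (n, false) = dinf_one.
  by rewrite /dinf_mul /dinf_one /= addNr.
by rewrite act_one.
Qed.

Lemma fix_inv n x h : act (n, false) x = x ->
  act (n, false) (act h x) = act h x.
Proof.
move=> H; case: h => m b.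
have E : dinf_mul (n, false) (m, b) =
         dinf_mul (m, b) ((if b then (- n)%R else n), false).
  by case: b; rewrite /dinf_mul /= ?opprK addrC.
rewrite -act_mul E act_mul; congr (act _ _).
by clear E; case: b => //; apply: fix_neg.
Qed.

Hypothesis Hh : hausdorff_space X.
Hypothesis Hmin : minimal_action act.

Lemma fix_all n x0 : act (n, false) x0 = x0 -> forall y, act (n, false) y = y.
Proof.
move=> H0 y; apply: Hh => A B nA nB.
have cy : closure (range (fun g => act g x0)) y by rewrite Hmin.
have nA' : nbhs y (act (n, false) @^-1` A) by apply: (act_cont (n, false) y).
have [z [[h _ <-] [Az Bz]]] := cy _ (filterI nA' nB).
exists (act h x0); split => //.
by move: Az; rewrite /preimage /= fix_inv.
Qed.

Lemma mult_fix c : (forall y, act (c, false) y = y) ->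
  forall (k : nat) y, act ((Posz k * c)%R, false) y = y.
Proof.
move=> Hc; elim=> [|k IH] y.
  by rewrite mul0r; apply: act_one.
have -> : ((Posz k.+1 * c)%R, false) = dinf_mul (c, false) ((Posz k * c)%R, false).
  by rewrite /dinf_mul /= intS mulrDl mul1r.
by rewrite act_mul IH Hc.
Qed.

Lemma trans_fix n x0 : n != 0%R -> act (n, false) x0 = x0 -> finite_set [set: X].
Proof.
move=> n0 H0.
have Hall := @fix_all n x0 H0.
have Hneg : forall y, act ((- n)%R, false) y = y by move=> y; apply: fix_neg.
have Hq : forall (q : int) y, act ((q * n)%R, false) y = y.
  case=> k y; first exact: mult_fix.
  rewrite NegzE mulNr -mulrN; exact: mult_fix.
set S := [set act (Posz p.1, p.2) x0 | p in `I_(absz n) `*` [set: bool]].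
have finS : finite_set S.
  apply: finite_image; apply: finite_setX; first exact: finite_II.
  exact: finite_finset.
have clS : closed S.
  by move/accessible_finite_set_closed: (hausdorff_accessible Hh); apply.
have sub : range (fun g => act g x0) `<=` S.
  move=> _ [[m b] _ <-].
  have r0 := modz_ge0 m n0.
  have rn := ltz_mod m n0.
  exists (absz (m %% n)%Z, b).
    split => //=; rewrite /=.
    move: rn; rewrite -[X in (X < _)%R]gez0_abs //; lia.
  rewrite /= gez0_abs //.
  have -> : (m, b) = dinf_mul (((m %/ n)%Z * n)%R, false) ((m %% n)%Z, b).
    by rewrite /dinf_mul /= -divz_eq.
  by rewrite act_mul Hq.
apply: (sub_finite_set _ finS) => y _.
have : closure (range (fun g => act g x0)) y by rewrite Hmin.
by move/(closureS sub); rewrite -(closure_id S).1.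
Qed.

End Act.

Definition pX (X : topologicalType) (x : X) : ptopologicalType :=
  HB.pack_for ptopologicalType X (isPointed.Build X x).
Lemma cc_of (X : topologicalType) (x : X) : compact [set: X] -> cover_compact [set: X].
Proof. move=> H. have := @compact_cover (@pX X x). move=> E.
have : @compact (@pX X x) setT by exact: H.
rewrite E. exact. Qed.

Theorem proposition2p6 (X : topologicalType) (act : Dinf -> X -> X) :
  compact [set: X] -> hausdorff_space X -> ~ finite_set [set: X] ->
  continuous_dinf_action act -> minimal_action act ->
  topologically_free act.
Proof.
move=> Hcpt Hh Hinf Hact Hmin g Hg O [x Ox] Oo.
case: (pselect (O `&` [set x | act g x <> x] !=set0)) => // Hno.
exfalso.
have Hfix : forall y, O y -> act g y = y.
  move=> y Oy; apply: contrapT => ne; apply: Hno; by exists y.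
have acc := hausdorff_accessible Hh.
(* no isolated point *)
have [y [Oy yx]] : exists y, O y /\ y <> x.
  apply: contrapT => Hn; apply: Hinf.
  have Oe : O = [set x].
    apply/seteqP; split => [z Oz|z ->] //=.
    by apply: contrapT => zx; apply: Hn; exists z.
  have orb : forall z, exists h, z = act h x.
    move=> z.
    have cz : closure (range (fun g => act g z)) x by rewrite Hmin.
    have [w [[h _ <-] Ow]] := cz O (open_nbhs_nbhs (conj Oo Ox)).
    exists (dinv h); rewrite Oe /= in Ow; by rewrite -Ow (@act_dinvK X act Hact).
  have op1 : forall z : X, open [set z].
    move=> z; have [h ->] := orb z.
    have -> : [set act h x] = act (dinv h) @^-1` O.
      apply/seteqP; split => w /=.
        by move=> ->; rewrite (@act_dinvK X act Hact).
      by rewrite Oe /= => <-; rewrite (@act_K X act Hact).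
    by apply: (proj1 (continuousP _) (@act_cont X act Hact (dinv h))).
  have cc : cover_compact [set: X] := @cc_of X x Hcpt.
  have := cc X [set: X] (fun z => [set z]).
  case.
  - by move=> z _; apply: op1.
  - by move=> z _; exists z.
  move=> D' _ cov; apply: (finite_subfset D') => z _.
  by have [w /= Dw ->] := cov z I.
have nb : nbhs y (O `&` ~` [set x]).
  apply: open_nbhs_nbhs; split => //.
  apply: openI => //; apply: closed_openC; exact: accessible_closed_set1.
have cy : closure (range (fun g => act g x)) y by rewrite Hmin.
have [_ [[h _ <-] [Oh hx]]] := cy _ nb.
have gx := Hfix x Ox.
have gh := Hfix _ Oh.
have key : act (dinf_mul g (dinf_mul (dinv h) (dinf_mul g h))) x = x.
  by rewrite !(@act_mul X act Hact) gh (@act_dinvK X act Hact) gx.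
clear Hno; case: g Hg gx gh key Hfix => n [] Hg gx gh key Hfix; last first.
  apply: Hinf; apply: (@trans_fix X act Hact Hh Hmin n x) => //.
  apply/eqP => n0; apply: Hg; by rewrite n0.
case: h hx gh key Oh => m [] hx gh key Oh.
- move: key; rewrite /dinv /dinf_mul /= => key.
  apply: Hinf; apply: (@trans_fix X act Hact Hh Hmin _ x _ key).
  apply/eqP => E; apply: hx.
  have mn : m = n by move: E; clear; lia.
  by rewrite /= mn.
- move: key; rewrite /dinv /dinf_mul /= => key.
  apply: Hinf; apply: (@trans_fix X act Hact Hh Hmin _ x _ key).
  apply/eqP => E; apply: hx.
  have m0 : m = 0%R by move: E; clear; lia.
  by rewrite /= m0; exact: (@act_one X act Hact).
Qed.
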